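(* Let $E\in(-2,2)$, $k=\arccos(-E/2)\in(0,\pi)$, let $w_\sigma$ be a compactly supported real random variable on a probability space $(\Sigma,\mathbb P)$, let $\delta\in\mathbb R$, and let $$T^{\epsilon,\delta}_\sigma=\begin{pmatrix}e^{-\imath k}&0\\0&e^{\imath k}\end{pmatrix}\exp\Big[\frac{\imath\delta+\epsilon w_\sigma}{2\sin(k)}(B_2+B_3)\Big].$$ If $\epsilon\ne0$ and the support of $w_\sigma$ contains more than one point, then the support of $T^{\epsilon,\delta}_\sigma$ is strongly irreducible, i.e. every finite set $F\subset\overline{\mathbb C}$ satisfies $\mathrm{supp}(T^{\epsilon,\delta}_\sigma)\cdot F\not\subset F$.
   Context: $B_2=\begin{pmatrix}0&\imath\\-\imath&0\end{pmatrix}$, $B_3=\begin{pmatrix}\imath&0\\0&-\imath\end{pmatrix}$. For $T=\begin{pmatrix}a&b\\c&d\end{pmatrix}$ with $\det T=1$, the Möbius action on $\overline{\mathbb C}=\mathbb C\cup\{\infty\}$ is $T\cdot z=\frac{az+b}{cz+d}$; $\mathrm{supp}(T^{\epsilon,\delta}_\sigma)$ is the support of the distribution of the random matrix, and $\mathrm{supp}(T^{\epsilon,\delta}_\sigma)\cdot F=\{T\cdot z:T\in\mathrm{supp}(T^{\epsilon,\delta}_\sigma),z\in F\}$. (These matrices are the single-site Anderson transfer matrices at energy $E+\epsilon(\cdot)-\imath\delta$ after the basis change to $\mathrm{SU}(1,1)$ form.) *)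

(* Defs.v *)
From HB Require Import structures.
From mathcomp Require Import all_boot all_order all_algebra.
From mathcomp Require Import all_classical all_reals all_analysis.
From mathcomp.real_closed Require Import complex.
Set Implicit Arguments. Unset Strict Implicit. Unset Printing Implicit Defensive.
Import Order.TTheory GRing.Theory Num.Theory.
Import numFieldNormedType.Exports.
Local Open Scope classical_set_scope.
Local Open Scope ring_scope.
Local Open Scope complex_scope.

Section Defs.
Variable R : realType.
Local Notation C := (R[i]).

Definition cmod (z : C) : R := Num.sqrt (complex.Re z ^+ 2 + complex.Im z ^+ 2).

Definition mx22 (a b c d : C) : 'M[C]_2 :=
  \matrix_(i < 2, j < 2)
    if (i : nat) == 0%N then (if (j : nat) == 0%N then a else b)
    else (if (j : nat) == 0%N then c else d).

Definition B2 : 'M[C]_2 := mx22 0 'i (- 'i) 0.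
Definition B3 : 'M[C]_2 := mx22 'i 0 0 (- 'i).

Definition mexp_psum (A : 'M[C]_2) (N : nat) : 'M[C]_2 :=
  \sum_(n < N) ((n`!)%:R)^-1 *: A ^+ n.

Definition mexp (A : 'M[C]_2) : 'M[C]_2 :=
  \matrix_(i < 2, j < 2)
    (limn (fun N => complex.Re (mexp_psum A N i j)) +i* limn (fun N => complex.Im (mexp_psum A N i j))).

Definition ephase (t : R) : C := cos t +i* sin t.

Definition kE (E : R) : R := acos (- E / 2).

(* the transfer matrix T^{eps,delta} for the value x of w_sigma *)
Definition transfer (E eps delta x : R) : 'M[C]_2 :=
  let k := kE E in
  mx22 (ephase (- k)) 0 0 (ephase k) *m
  mexp ((('i * delta%:C + (eps * x)%:C) / (2 * sin k)%:C) *: (B2 + B3)).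

(* Riemann sphere: None is the point at infinity *)
Definition sphere := option C.

(* Moebius action (det = 1 assumed by the context; conventions at infinity) *)
Definition mobius (M : 'M[C]_2) (z : sphere) : sphere :=
  let a := M ord0 ord0 in let b := M ord0 ord_max in
  let c := M ord_max ord0 in let d := M ord_max ord_max in
  match z with
  | Some z => if c * z + d == 0 then None else Some ((a * z + b) / (c * z + d))
  | None => if c == 0 then None else Some (a / c)
  end.

Definition mxdist (M N : 'M[C]_2) : R := \sum_i \sum_j cmod (M i j - N i j).

End Defs.

Definition supp_rv (R : realType) (d : measure_display) (T : measurableType d)
  (P : probability T R) (w : T -> R) : set R :=
  [set x | forall e : R, 0 < e -> (0 < P [set s | (`|w s - x| < e)%R])%E].

Definition supp_mx (R : realType) (d : measure_display) (T : measurableType d)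
  (P : probability T R) (Tm : T -> 'M[R[i]]_2) : set 'M[R[i]]_2 :=
  [set M | forall e : R, 0 < e -> (0 < P [set s | (mxdist (Tm s) M < e)%R])%E].

(* Main.v *)
Require Import Defs.
From HB Require Import structures.
From mathcomp Require Import all_boot all_order all_algebra.
From mathcomp Require Import all_classical all_reals all_analysis.
From mathcomp.real_closed Require Import complex.
From mathcomp Require Import ring lra.
Import Order.TTheory GRing.Theory Num.Theory.
Import numFieldNormedType.Exports.
Local Open Scope classical_set_scope.
Local Open Scope ring_scope.
Set Implicit Arguments. Unset Strict Implicit.
Section S.
Variable R : realType.
Local Notation C := (R[i]).
Local Open Scope complex_scope.

Definition NN : 'M[C]_2 := B2 R + B3 R.
Definition ii : C := 'i%C.
Lemma ii2 : ii * ii = -1. Proof. by rewrite /ii -expr2 sqr_i. Qed.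

Lemma NN_eq : NN = mx22 ii ii (- ii) (- ii).
Proof.
apply/matrixP => i j; rewrite !mxE.
case: ifP => _; case: ifP => _; rewrite ?addr0 ?add0r //.
Qed.

Lemma NN2 : NN * NN = 0.
Proof.
rewrite NN_eq; apply/matrixP => i j; rewrite !mxE !big_ord_recl big_ord0 !mxE /=.
case: ifP => _; case: ifP => _; rewrite ?mulrN ?mulNr ?opprK ii2; ring.
Qed.

Lemma psum_eq (a : C) n : (1 < n)%N -> mexp_psum (a *: NN) n = 1 + a *: NN.
Proof.
case: n => [//|[//|n]] _.
rewrite /mexp_psum !big_ord_recl big1 ?addr0.
  by rewrite /= expr0 expr1 !fact0 invr1 !scale1r.
move=> i _; rewrite /bump /= exprZn.
have -> : NN ^+ (1 + (1 + i)) = 0.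
  by rewrite addnA exprD expr2 NN2 mul0r.
by rewrite !scaler0.
Qed.

Lemma mexp_eq (a : C) : mexp (a *: NN) = 1 + a *: NN.
Proof.
apply/matrixP => i j; rewrite /mexp mxE.
rewrite (@lim_near_cst _ _ _ _ _ (complex.Re ((1 + a *: NN) i j))).
rewrite (@lim_near_cst _ _ _ _ _ (complex.Im ((1 + a *: NN) i j))).
  by case: ((1 + a *: NN) i j).
all: try exact: norm_hausdorff.
all: near=> n; rewrite psum_eq //; near: n; by exists 2%N.
Unshelve. all: end_near.
Qed.

Definition alpha (E eps delta x : R) : C :=
  (('i * delta%:C + (eps * x)%:C) / (2 * sin (kE E))%:C).

Lemma transfer_eq (E eps delta x : R) :
  let k := kE E in
  let j := ii * alpha E eps delta x in
  transfer E eps delta x =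
  mx22 (ephase (-k) * (1 + j)) (ephase (-k) * j) (- (ephase k * j)) (ephase k * (1 - j)).
Proof.
move=> k j; rewrite /transfer -/k -/(alpha E eps delta x) -/(NN) mexp_eq NN_eq.
apply/matrixP => a b; rewrite /j.
case: a => [[|[|//]] ?]; case: b => [[|[|//]] ?];
 rewrite !mxE !big_ord_recl big_ord0 !mxE /= ?eqE /=; ring.
Qed.

Definition tau (z : sphere R) : sphere R :=
  match z with None => Some 0 | Some z => if z + 1 == 0 then None else Some (z+1)^-1 end.
Definition taui (z : sphere R) : sphere R :=
  match z with None => Some (-1) | Some w => if w == 0 then None else Some (w^-1 - 1) end.
Definition tr (t : C) (z : sphere R) : sphere R := omap (fun u => u + t) z.
Definition mw (om : C) (z : sphere R) : sphere R := omap (fun u => om * u) z.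

Lemma mob_eq p q j z : p != 0 -> q != 0 ->
  mobius (mx22 (p*(1+j)) (p*j) (-(q*j)) (q*(1-j))) z = mw (p/q) (taui (tr (-j) (tau z))).
Proof.
move=> p0 q0; rewrite /mobius !mxE /=.
case: z => [z|] /=.
- have [z1|z1] := eqVneq (z + 1) 0.
  + have -> : z = -1 by apply/eqP; rewrite -subr_eq0 opprK z1.
    have -> : - (q * j) * -1 + q * (1 - j) = q by ring.
    rewrite (negPf q0) /=; congr Some; field; exact: q0.
  + rewrite ?(negPf z1) /=.
    have -> : - (q * j) * z + q * (1 - j) = q * (z+1) * ((z+1)^-1 - j).
      by field.
    rewrite !mulf_eq0 (negPf q0) (negPf z1) /=.
    have [w0|w0] := eqVneq ((z + 1)^-1 - j) 0; first by [].
    rewrite /=; congr Some; field.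
    have -> : 1 + - j * (z + 1) = (z+1) * ((z+1)^-1 - j) by field.
    by rewrite z1 mulf_neq0 // q0.
- have [j0|j0] := eqVneq j 0.
  + rewrite j0.
    case: ifP => [_|/eqP h]; last by exfalso; apply: h; ring.
    case: ifP => [_|/eqP h] //; last by exfalso; apply: h; ring.
  + case: ifP => [/eqP h|_].
      by exfalso; move/eqP: h; rewrite oppr_eq0 mulf_eq0 (negPf q0) (negPf j0).
    case: ifP => [/eqP h|_].
      by exfalso; move/eqP: h; rewrite sub0r oppr_eq0 (negPf j0).
    rewrite /=; congr Some; field. by rewrite j0 q0.
Qed.

Lemma tauK : cancel tau taui.
Proof.
case=> [z|] /=; last by rewrite eqxx.
have [z1|z1] := eqVneq (z + 1) 0.
  by rewrite /=; move/eqP: z1; rewrite addr_eq0 => /eqP ->.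
rewrite /= invr_eq0 (negPf z1) /=; congr Some; rewrite invrK; ring.
Qed.

Lemma tauiK : cancel taui tau.
Proof.
case=> [w|] /=; last by rewrite addNr eqxx.
have [w0|w0] := eqVneq w 0; first by rewrite w0.
rewrite /= subrK invr_eq0 (negPf w0) invrK //.
Qed.

Lemma tau_inj : injective tau. Proof. exact: can_inj tauK. Qed.
Lemma taui_inj : injective taui. Proof. exact: can_inj tauiK. Qed.
Lemma tr_inj t : injective (tr t).
Proof. by case=> [a|] [b|] //= [] /addIr ->. Qed.
Lemma mw_inj om : om != 0 -> injective (mw om).
Proof. by move=> om0; case=> [a|] [b|] //= [] /(mulfI om0) ->. Qed.

Lemma shift_nil (G : seq C) (s : C) : s != 0 ->
  (forall w, w \in G -> w + s \in G) -> G = [::].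
Proof.
move=> s0 HG; case: G HG => [//|w0 G] HG; exfalso.
pose phi (w : C) : R := complex.Re (w / s).
pose M := \sum_(v <- w0 :: G) `|phi v|.
have bnd : forall v, v \in w0 :: G -> phi v <= M.
  move=> v vG; apply: le_trans (ler_norm _) _.
  rewrite /M (big_rem v vG) /= lerDl; apply: sumr_ge0 => u _; exact: normr_ge0.
have phiS : forall v, phi (v + s) = phi v + 1.
  move=> v; rewrite /phi mulrDl divff //.
  by case: (v / s) => a b /=; rewrite ?addr0.
have iter : forall n : nat, w0 + n%:R * s \in w0 :: G.
  elim=> [|n IH]; first by rewrite mul0r addr0 mem_head.
  by rewrite mulrSr mulrDl mul1r addrA HG.
have phin : forall n : nat, phi (w0 + n%:R * s) = phi w0 + n%:R.
  elim=> [|n IH]; first by rewrite mul0r addr0 addr0.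
  by rewrite mulrSr mulrDl mul1r addrA phiS IH -addrA -mulrSr.
have [n Hn] : exists n : nat, M - phi w0 < n%:R.
  by exists (Num.truncn (M - phi w0)).+1; exact: truncnS_gt.
have := bnd _ (iter n); rewrite phin; lra.
Qed.

Lemma sink_gt0 (E : R) : -2 < E < 2 -> 0 < sin (kE E).
Proof.
move=> /andP[h1 h2]; apply: sin_gt0_pi; rewrite /kE; apply/andP; split.
  by apply: acos_gt0; apply/andP; split; lra.
by apply: acos_ltpi; apply/andP; split; lra.
Qed.

Lemma ephaseN (k : R) : ephase (- k) = cos k +i* (- sin k).
Proof. by rewrite /ephase cosN sinN. Qed.

Lemma ephase_neq0 (k : R) : sin k != 0 -> ephase k != 0.
Proof. by move=> s0; apply/eqP => h; move: (congr1 (@complex.Im R) h) => /= /eqP; rewrite (negPf s0). Qed.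

Lemma ephaseN_neq0 (k : R) : sin k != 0 -> ephase (- k) != 0.
Proof. by move=> s0; apply/eqP => h; move: (congr1 (@complex.Im R) h); rewrite ephaseN /= => /eqP; rewrite oppr_eq0 (negPf s0). Qed.

Lemma omega_neq1 (k : R) : sin k != 0 -> ephase (- k) / ephase k != 1.
Proof.
move=> s0; apply/eqP => h.
have : ephase (-k) = ephase k.
  by rewrite -[RHS]mul1r -h mulrVK // unitfE ephase_neq0.
move/(congr1 (@complex.Im R)); rewrite ephaseN /= => /eqP.
rewrite -subr_eq0 -opprD oppr_eq0 -mulr2n mulrn_eq0 /= (negPf s0) //.
Qed.

Lemma cmodM (r : R) (g : C) : cmod (r%:C * g) = `|r| * cmod g.
Proof.
case: g => a b; rewrite /cmod /= !mul0r subr0 addr0.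
have -> : (r*a)^+2 + (r*b)^+2 = r^+2 * (a^+2+b^+2) by ring.
by rewrite sqrtrM ?sqr_ge0 // sqrtr_sqr.
Qed.

Lemma cmod_ge0 (g : C) : 0 <= cmod g.
Proof. exact: sqrtr_ge0. Qed.

Lemma mxdist22 (a b c d a' b' c' d' : C) :
  mxdist (mx22 a b c d) (mx22 a' b' c' d') =
  cmod (a - a') + cmod (b - b') + cmod (c - c') + cmod (d - d').
Proof. by rewrite /mxdist !big_ord_recl !big_ord0 !mxE /=; ring. Qed.

Lemma alphaB (E eps delta y x : R) :
  alpha E eps delta y - alpha E eps delta x = (y - x)%:C * (eps%:C / (2 * sin (kE E))%:C).
Proof. rewrite /alpha !rmorphM rmorphB /=. ring. Qed.

Definition Kc (E eps : R) : R :=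
  let k := kE E in let al := eps%:C / (2 * sin k)%:C in
  cmod (ephase (-k) * (ii * al)) + cmod (ephase (-k) * (ii * al))
  + cmod (- (ephase k * (ii * al))) + cmod (- (ephase k * (ii * al))).

Lemma Kc_ge0 E eps : 0 <= Kc E eps.
Proof. by rewrite /Kc !addr_ge0 // cmod_ge0. Qed.

Lemma transfer_dist (E eps delta y x : R) :
  mxdist (transfer E eps delta y) (transfer E eps delta x) = `|y - x| * Kc E eps.
Proof.
rewrite !transfer_eq mxdist22 /Kc.
have hy : alpha E eps delta y = alpha E eps delta x +
   (y - x)%:C * (eps%:C / (2 * sin (kE E))%:C) by rewrite -(alphaB E eps delta y x); ring.
rewrite hy !mulrDr -!cmodM; congr (cmod _ + cmod _ + cmod _ + cmod _); ring.
Qed.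

Lemma supp_transfer (d : measure_display) (T : measurableType d) (P : probability T R)
  (w : T -> R) (E eps delta x : R) :
  supp_rv P w x -> supp_mx P (fun s => transfer E eps delta (w s)) (transfer E eps delta x).
Proof.
move=> hx e e0.
have [K0|K0] := eqVneq (Kc E eps) 0.
  rewrite (_ : [set s | _] = setT); first by rewrite probability_setT lte01.
  apply/seteqP; split => s //= _; by rewrite transfer_dist K0 mulr0.
have Kp : 0 < Kc E eps by rewrite lt0r K0 Kc_ge0.
rewrite (_ : [set s | _] = [set s | `|w s - x| < e / Kc E eps]).
  by apply: hx; exact: divr_gt0.
apply/seteqP; split => s /=; by rewrite transfer_dist ltr_pdivlMr.
Qed.

Lemma rC_neq0 (r : R) : r != 0 -> r%:C != 0 :> C.
Proof. by move=> r0; apply/eqP => -[] /eqP; rewrite (negPf r0). Qed.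

Lemma ii_neq0 : ii != 0.
Proof. by apply/eqP => -[] /eqP; rewrite oner_eq0. Qed.
End S.
Arguments ii {R}.

Theorem proposition5 (R : realType) (d : measure_display) (T : measurableType d)
  (P : probability T R) (w : {RV P >-> R}) (E delta eps : R) :
  -2 < E < 2 ->
  compact (supp_rv P w) ->
  eps != 0 ->
  (exists x y : R, supp_rv P w x /\ supp_rv P w y /\ x != y) ->
  forall F : seq (sphere R), F != [::] ->
    ~ (forall (M : 'M[R[i]]_2) (z : sphere R),
         supp_mx P (fun s => transfer E eps delta (w s)) M ->
         z \in F -> mobius M z \in F).
Proof.
move=> HE _ eps0 [x [y [hx [hy xy]]]] F F0 HF.
have sk := sink_gt0 HE; have s0 : sin (kE E) != 0 by rewrite gt_eqF.
set om := ephase (- kE E) / ephase (kE E).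
have om0 : om != 0.
  by rewrite /om mulf_neq0 // ?invr_eq0; [exact: ephaseN_neq0 | exact: ephase_neq0].
pose f u := mobius (transfer E eps delta u).
pose a (u : R) := - (ii * alpha E eps delta u).
have fE (u : R) z : f u z = mw om (taui (tr (a u) (tau z))).
  rewrite /f; have -> := transfer_eq E eps delta u.
  rewrite mob_eq //; [exact: ephaseN_neq0 | exact: ephase_neq0].
have finj u : injective (f u).
  move=> z1 z2; rewrite !fE => /mw_inj-/(_ om0) /taui_inj /tr_inj; exact: tau_inj.
have fF u z : supp_rv P w u -> z \in F -> f u z \in F.
  by move=> hu zF; apply: HF => //; exact: supp_transfer.
have surj z' : z' \in F -> exists2 z, z \in F & f x z = f y z'.
  move=> z'F.
  have sub : {subset map (f x) (undup F) <= undup F}.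
    by move=> v /mapP [z zF ->]; rewrite mem_undup; apply: fF => //; rewrite -mem_undup.
  have U : uniq (map (f x) (undup F)) by rewrite map_inj_uniq // undup_uniq.
  have sz : (size (undup F) <= size (map (f x) (undup F)))%N by rewrite size_map.
  have [_ eqs] := uniq_min_size U sub sz.
  have : f y z' \in map (f x) (undup F) by rewrite eqs mem_undup; exact: fF.
  by case/mapP => z zF ->; exists z => //; rewrite -mem_undup.
pose sft := a y - a x.
have sft0 : sft != 0.
  have -> : sft = ii * (alpha E eps delta x - alpha E eps delta y) by rewrite /sft /a; ring.
  rewrite alphaB mulf_neq0 ?ii_neq0 // mulf_neq0 ?rC_neq0 ?subr_eq0 //.
  rewrite mulf_neq0 ?rC_neq0 // invr_eq0 rC_neq0 // mulf_neq0 //.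
pose G := pmap (@tau R) F.
have HG : forall v, v \in G -> v + sft \in G.
  move=> v; rewrite mem_pmap => /mapP [z' z'F hz'].
  have [z zF e] := surj z' z'F.
  move: e; rewrite !fE => /mw_inj-/(_ om0) /taui_inj.
  rewrite -hz' /=; case hz: (tau z) => [u|] //= [] hu.
  rewrite mem_pmap; apply/mapP; exists z => //; rewrite hz; congr Some.
  by apply: (addIr (a x)); rewrite hu /sft; ring.
have G0 := shift_nil sft0 HG.
have Fm1 : forall z, z \in F -> tau z = None.
  move=> z zF; case hz: (tau z) => [v|] //.
  have : v \in G by rewrite mem_pmap; apply/mapP; exists z.
  by rewrite G0 in_nil.
have [z0 z0F] : exists z0, z0 \in F.
  by case EF: F F0 => [|h t] // _; exists h; rewrite mem_head.
have e0 : z0 = Some (-1) by rewrite -(tauK z0) Fm1.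
have := fF x _ hx z0F; rewrite fE Fm1 //= => /Fm1 /=.
case: ifP => // /eqP h _.
have : om = 1.
  have h2 : om - 1 = - (om * -1 + 1) by ring.
  by move: h2; rewrite h oppr0 => /eqP; rewrite subr_eq0 => /eqP.
by apply/eqP; exact: omega_neq1.
Qed.
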